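(* Let $f$ satisfy the $L$-descent condition for some $L>0$ and let $\{x^k\}$ be generated by Algorithm IRG with $\theta<\mu$, $\rho_k=\varepsilon_k$ for all $k$, and constant-type stepsizes (there exist $\delta\in(0,2)$ and $\delta'>0$ with $\delta'\le\frac{2-\delta}{L}$ and $t_k\in[\delta',\frac{2-\delta}{L}]$ for all $k$). Assume $\{x^k\}$ has an accumulation point $\bar x$ and $f$ satisfies the KL property at $\bar x$ with $\psi(t)=Mt^q$ for some $M>0$ and $q\in(0,1)$. Assume $\mathbb N\setminus\mathcal N$ is infinite, enumerate it increasingly as $j_1<j_2<\cdots$, and set $z^k:=x^{j_k}$. Then: (i) if $q\in(0,1/2]$, $\{z^k\}$ converges linearly to $\bar x$, i.e. there exist $C>0$ and $\lambda\in(0,1)$ with $\|z^k-\bar x\|\le C\lambda^k$ for all large $k$; (ii) if $q\in(1/2,1)$, there exists $\varrho>0$ with $\|z^k-\bar x\|\le\varrho k^{-\frac{1-q}{2q-1}}$ for all sufficiently large $k$.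
   Context: Algorithm IRG (general inexact reduced gradient framework). Let $f:\mathbb R^n\to\mathbb R$ be continuously differentiable. Parameters: initial point $x^1\in\mathbb R^n$, initial radii $\varepsilon_1>0$, $r_1>0$, reduction factors $\mu,\theta\in(0,1)$, and a sequence $\{\rho_k\}$ of positive numbers. For $k=1,2,\dots$: (1) choose $g^k\in\mathbb R^n$ with $\|g^k-\nabla f(x^k)\|\le\min\{\varepsilon_k,\rho_k\}$; (2) if $\|g^k\|\le r_k+\varepsilon_k$, set $r_{k+1}=\mu r_k$, $\varepsilon_{k+1}=\theta\varepsilon_k$, $d^k=0$; otherwise set $r_{k+1}=r_k$, $\varepsilon_{k+1}=\varepsilon_k$ and $d^k=-\frac{\|g^k\|-\varepsilon_k}{\|g^k\|}g^k$; (3) choose a stepsize $t_k>0$ by some rule; (4) set $x^{k+1}=x^k+t_kd^k$. The set of null iterations is $\mathcal N:=\{k\in\mathbb N: x^{k+1}=x^k\}$. $f$ satisfies the $L$-descent condition if $f(y)\le f(x)+\langle\nabla f(x),y-x\rangle+\frac L2\|y-x\|^2$ for all $x,y\in\mathbb R^n$. KL property with $\psi(t)=Mt^q$: there exist $\eta>0$ and a neighborhood $U$ of $\bar x$ such that $\|\nabla f(x)\|\ge M(f(x)-f(\bar x))^q$ for all $x\in U$ with $f(\bar x)<f(x)<f(\bar x)+\eta$. *)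

(* Defs.v *)
From HB Require Import structures.
From mathcomp Require Import all_boot all_order all_algebra.
From mathcomp Require Import all_classical all_reals all_analysis.
Set Implicit Arguments. Unset Strict Implicit. Unset Printing Implicit Defensive.
Import Order.TTheory GRing.Theory Num.Theory.
Import numFieldNormedType.Exports.
Local Open Scope ring_scope.

(* Standard (Euclidean) inner product and norm on R^n = 'rV[R]_n.
   (MathComp's built-in norm on matrices is the max norm, hence these.) *)
Definition dotv (R : realType) (n : nat) (u v : 'rV[R]_n) : R :=
  \sum_(i < n) u 0 i * v 0 i.

Definition enorm (R : realType) (n : nat) (u : 'rV[R]_n) : R :=
  Num.sqrt (dotv u u).

Definition C1_with_gradient (R : realType) (n : nat)
  (f : 'rV[R]_n -> R) (gf : 'rV[R]_n -> 'rV[R]_n) : Prop :=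
  (forall x, differentiable f x /\ forall v, 'd f x v = dotv (gf x) v)
  /\ continuous gf.

Definition L_descent (R : realType) (n : nat)
  (f : 'rV[R]_n -> R) (gf : 'rV[R]_n -> 'rV[R]_n) (L : R) : Prop :=
  forall x y, f y <= f x + dotv (gf x) (y - x) + L / 2 * enorm (y - x) ^+ 2.

Definition accumulation_point (R : realType) (n : nat)
  (x : nat -> 'rV[R]_n) (xbar : 'rV[R]_n) : Prop :=
  forall e : R, 0 < e -> forall K : nat, exists k, (K <= k)%N /\ enorm (x k - xbar) < e.

(* KL property at xbar with psi(t) = M t^q; the neighborhood U is taken as an
   open Euclidean ball around xbar (every neighborhood contains one). *)
Definition KL_power (R : realType) (n : nat)
  (f : 'rV[R]_n -> R) (gf : 'rV[R]_n -> 'rV[R]_n) (xbar : 'rV[R]_n) (M q : R) : Prop :=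
  exists eta : R, 0 < eta /\ exists r : R, 0 < r /\
    forall x, enorm (x - xbar) < r -> f xbar < f x -> f x < f xbar + eta ->
      M * powR (f x - f xbar) q <= enorm (gf x).

(* Sequences generated by Algorithm IRG (iterations indexed k = 1, 2, ...;
   index 0 is unused), with rho_k = eps_k and constant-type stepsizes
   t_k in [delta', (2 - delta)/L]. *)
Definition IRG_run (R : realType) (n : nat)
  (gf : 'rV[R]_n -> 'rV[R]_n) (L mu theta delta delta' : R)
  (x g d : nat -> 'rV[R]_n) (eps r rho t : nat -> R) : Prop :=
  [/\ 0 < eps 1%N, 0 < r 1%N, 0 < mu < 1, 0 < theta < 1 &
   forall k : nat, (1 <= k)%N ->
   [/\ 0 < rho k,
       enorm (g k - gf (x k)) <= Num.min (eps k) (rho k),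
       (if enorm (g k) <= r k + eps k then
          [/\ r k.+1 = mu * r k, eps k.+1 = theta * eps k & d k = 0]
        else
          [/\ r k.+1 = r k, eps k.+1 = eps k &
              d k = - ((enorm (g k) - eps k) / enorm (g k)) *: g k]),
       0 < t k & x k.+1 = x k + t k *: d k]].

(* Main.v *)
Require Import Defs.
From HB Require Import structures.
From mathcomp Require Import all_boot all_order all_algebra.
From mathcomp Require Import all_classical all_reals all_analysis.
From mathcomp Require Import lra ring zify.
Import Order.TTheory GRing.Theory Num.Theory.
Import numFieldNormedType.Exports.
Local Open Scope ring_scope.

Set Implicit Arguments. Unset Strict Implicit.

Section Real.
Variable R : realType.

Lemma expR_conc (r v : R) : 0 <= r -> r <= 1 -> expR (r * v) <= 1 - r + r * expR v.
Proof.
move=> r0 r1.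
have := @convex_expR R (Itv01 r0 r1) v 0.
rewrite !convRE /= expR0 mulr0 addr0 mulr1 /unstable.onem; lra.
Qed.

Lemma powR_pos (a e : R) : 0 < a -> powR a e = expR (e * ln a).
Proof. by move=> a0; rewrite /powR gt_eqF. Qed.

Lemma conc_tangent (x y r : R) : 0 < x -> 0 < y -> 0 < r -> r < 1 ->
  r * (y - x) <= (powR y r - powR x r) * powR y (1 - r).
Proof.
move=> x0 y0 r0 r1.
have H := @expR_conc r (ln x - ln y) (ltW r0) (ltW r1).
have Ev : expR (ln x - ln y) = x / y by rewrite expRB !lnK ?posrE.
rewrite Ev in H.
have EX : powR x r = powR y r * expR (r * (ln x - ln y)).
  by rewrite !powR_pos // -expRD; congr expR; ring.
have YZ : powR y r * powR y (1 - r) = y.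
  rewrite -powRD; last by rewrite (gt_eqF y0) implybT.
  by rewrite addrC subrK powRr1 // ltW.
have Z0 : 0 <= powR y (1 - r) by apply: powR_ge0.
have Y0 : 0 <= powR y r by apply: powR_ge0.
set w := x / y in H; have xw : x = w * y by rewrite /w mulfVK // gt_eqF.
rewrite EX.
set Y := powR y r in Y0 H EX YZ *; set Z := powR y (1 - r) in Z0 YZ *.
set E := expR _ in H *.
have HH : 0 <= (Y * (1 - r + r * w) - Y * E) * Z.
  by apply: mulr_ge0 => //; rewrite subr_ge0 ler_wpM2l.
have -> : (Y - Y * E) * Z = Y * Z - Y * E * Z by ring.
have E2 : (Y * (1 - r + r * w) - Y * E) * Z = (Y * Z) * (1 - r + r * w) - Y * E * Z by ring.
rewrite E2 YZ in HH; rewrite YZ xw; lra.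
Qed.

Lemma bern_neg (u p : R) : 0 < u -> 0 < p -> 1 - p * (u - 1) <= powR u (- p).
Proof.
move=> u0 p0; rewrite powR_pos //.
have H1 := expR_ge1Dx (- p * ln u).
have H2 : ln u <= u - 1.
  have := @le_ln1Dx R (u - 1); rewrite (_ : 1 + (u - 1) = u); last by ring.
  apply; lra.
nra.
Qed.

Lemma powR_neg_anti (X Y s : R) : 0 < X -> X <= Y -> 0 <= s ->
  powR Y (- s) <= powR X (- s).
Proof.
move=> X0 XY s0; rewrite !powRN lef_pV2 ?posrE ?powR_gt0 //; last by apply: lt_le_trans XY.
by apply: ge0_ler_powR => //; rewrite nnegrE ltW //; apply: lt_le_trans XY.
Qed.
End Real.


Section Vec.
Variables (R : realType) (n : nat).
Implicit Types (u v w : 'rV[R]_n).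

Lemma dotv_lin (a b : R) u v :
  dotv (a *: u + b *: v) (a *: u + b *: v) =
  a ^+ 2 * dotv u u + 2 * a * b * dotv u v + b ^+ 2 * dotv v v.
Proof.
rewrite /dotv !mulr_sumr -!big_split; apply: eq_bigr => i _; rewrite !mxE /=; ring.
Qed.

Lemma dotvC u v : dotv u v = dotv v u.
Proof. by apply: eq_bigr => i _; rewrite mulrC. Qed.

Lemma dotvDl u v w : dotv (u + v) w = dotv u w + dotv v w.
Proof. rewrite /dotv -big_split; apply: eq_bigr => i _; rewrite !mxE /=; ring. Qed.

Lemma dotvZl (a : R) u w : dotv (a *: u) w = a * dotv u w.
Proof. rewrite /dotv mulr_sumr; apply: eq_bigr => i _; rewrite !mxE /=; ring. Qed.

Lemma dotvZr (a : R) u w : dotv u (a *: w) = a * dotv u w.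
Proof. by rewrite dotvC dotvZl dotvC. Qed.

Lemma dotvNl u w : dotv (- u) w = - dotv u w.
Proof. rewrite /dotv -sumrN; apply: eq_bigr => i _; rewrite !mxE /=; ring. Qed.

Lemma dotvBl u v w : dotv (u - v) w = dotv u w - dotv v w.
Proof. by rewrite dotvDl dotvNl. Qed.

Lemma dotv_ge0 u : 0 <= dotv u u.
Proof. by apply: sumr_ge0 => i _; rewrite -expr2 sqr_ge0. Qed.

Lemma enorm_ge0 u : 0 <= enorm u.
Proof. exact: sqrtr_ge0. Qed.

Lemma enorm_sq u : enorm u ^+ 2 = dotv u u.
Proof. by rewrite /enorm sqr_sqrtr // dotv_ge0. Qed.

Lemma dotv_CS u v : dotv u v <= enorm u * enorm v.
Proof.
have [A0|Apos] := eqVneq (dotv u u) 0.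
  have H : forall i, u 0 i * u 0 i = 0.
    move=> i; apply: (psumr_eq0P _ A0) => // k _; by rewrite -expr2 sqr_ge0.
  have -> : dotv u v = 0.
    rewrite /dotv big1 // => i _.
    have : u 0 i ^+ 2 = 0 by rewrite expr2 H.
    by move/eqP; rewrite sqrf_eq0 => /eqP ->; rewrite mul0r.
  by rewrite mulr_ge0 // enorm_ge0.
have A0 : 0 < dotv u u by rewrite lt_neqAle eq_sym Apos dotv_ge0.
have H := dotv_ge0 ((- dotv u v) *: u + (dotv u u) *: v).
rewrite dotv_lin in H.
have H2 : dotv u v ^+ 2 <= dotv u u * dotv v v by nra.
have : dotv u v <= `|dotv u v| by apply: ler_norm.
move/le_trans; apply.
rewrite /enorm -sqrtrM ?dotv_ge0 // -sqrtr_sqr ler_sqrt //.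
by rewrite mulr_ge0 // dotv_ge0.
Qed.

Lemma enorm_triangle u v : enorm (u + v) <= enorm u + enorm v.
Proof.
have H := dotv_lin 1 1 u v.
rewrite !scale1r in H.
have hC := dotv_CS u v.
have e2 : enorm (u + v) ^+ 2 <= (enorm u + enorm v) ^+ 2.
  rewrite enorm_sq H sqrrD !enorm_sq; nra.
rewrite -(ler_pXn2r (n:=2)) // ?nnegrE ?addr_ge0 ?enorm_ge0 //.
Qed.

Lemma enormZ (a : R) u : enorm (a *: u) = `|a| * enorm u.
Proof.
have H := dotv_lin a 0 u u.
rewrite scale0r addr0 in H.
rewrite /enorm H -sqrtr_sqr -sqrtrM ?sqr_ge0 //; congr Num.sqrt; ring.
Qed.

Lemma enormN u : enorm (- u) = enorm u.
Proof. by rewrite -scaleN1r enormZ normrN normr1 mul1r. Qed.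

Lemma enormB u v : enorm (u - v) = enorm (v - u).
Proof. by rewrite -enormN opprB. Qed.

Lemma enorm_tri3 u v w : enorm (u - w) <= enorm (u - v) + enorm (v - w).
Proof.
have -> : u - w = (u - v) + (v - w) by rewrite addrA subrK.
exact: enorm_triangle.
Qed.

Lemma entry_le_enorm u (i : 'I_1) (k : 'I_n) : `|u i k| <= enorm u.
Proof.
rewrite (ord1 i) /enorm -sqrtr_sqr ler_sqrt ?dotv_ge0 // /dotv (bigD1 k) //=.
rewrite -[leLHS]addr0 expr2 lerD2l sumr_ge0 // => m _.
by rewrite -expr2 sqr_ge0.
Qed.

Lemma mxnorm_le_enorm u : `|u| <= enorm u.
Proof.
rewrite [leLHS]mx_normrE. apply: bigmax_le; first exact: enorm_ge0.
by move=> [a b] _; apply: entry_le_enorm.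
Qed.

End Vec.


Lemma jmono_le (j : nat -> nat) : (forall k, (1 <= k)%N -> (j k < j k.+1)%N) ->
  forall k k', (1 <= k)%N -> (k <= k')%N -> (j k <= j k')%N.
Proof.
move=> jinc k k' k1 kk'.
have [p ->] : exists p, k' = (k + p)%N by exists (k' - k)%N; rewrite subnKC.
elim: p => [|p IH]; first by rewrite addn0.
rewrite addnS; apply: leq_trans IH (ltnW (jinc _ _)); lia.
Qed.

Lemma interval_eq (T : Type) (x : nat -> T) (j : nat -> nat) :
  (forall k, (1 <= k)%N -> (j k < j k.+1)%N) ->
  (forall m, (1 <= m)%N -> x m.+1 <> x m -> exists k, (1 <= k)%N /\ j k = m) ->
  forall k, (1 <= k)%N -> forall i, (j k < i)%N -> (i <= j k.+1)%N -> x i = x (j k.+1).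
Proof.
move=> jinc jnull k k1.
suff H : forall p i, (i + p)%N = j k.+1 -> (j k < i)%N -> x i = x (j k.+1).
  by move=> i h1 h2; apply: (H (j k.+1 - i)%N); lia.
elim=> [|p IH] i e hi; first by rewrite -e addn0.
have e' : (i.+1 + p)%N = j k.+1 by lia.
rewrite -(IH i.+1 e') //; last by lia.
have ilt : (i < j k.+1)%N by lia.
case: (pselect (x i.+1 = x i)) => [->//|hne].
have [k' [k'1 jk']] := jnull i ltac:(lia) hne.
case: (leqP k' k) => hk.
  have := jmono_le jinc k'1 hk; lia.
have := jmono_le jinc (k:=k.+1) (k':=k') ltac:(lia) hk; lia.
Qed.

Lemma covering (j : nat -> nat) : (forall k, (1 <= k)%N -> (j k < j k.+1)%N) ->
  forall i, (j 1 < i)%N -> exists k, [/\ (1 <= k)%N, (j k < i)%N & (i <= j k.+1)%N].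
Proof.
move=> jinc; elim=> [//|i IH] hi.
case: (ltnP (j 1) i) => h.
  have [k [k1 h1 h2]] := IH h.
  case: (ltnP i (j k.+1)) => h3; first by exists k; split => //; exact: leqW.
  exists k.+1; split => //; apply: leq_trans (jinc k.+1 isT); by rewrite ltnS.
have e : i = j 1 by apply/eqP; rewrite eqn_leq h -ltnS hi.
by exists 1%N; rewrite e; split => //; apply: jinc.
Qed.

Lemma natD K k : (K.+2 <= k)%N -> (K <= k.+1)%N. Proof. lia. Qed.

Section Cont.
Variables (R : realType) (n : nat).
Lemma cont_enorm (f : 'rV[R]_n -> R) xb : {for xb, continuous f} ->
  forall e, 0 < e -> exists2 dl, 0 < dl & forall y, enorm (y - xb) < dl -> `|f xb - f y| < e.
Proof.
move=> /cvgrPdist_lt Hc e e0; have := Hc e e0; move/nbhs_normP => [dl /= dl0 Hb].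
exists dl => // y hy; apply: Hb => /=.
apply: le_lt_trans (mxnorm_le_enorm _) _; by rewrite enormB.
Qed.
End Cont.


Lemma natA k0 k : ((2 * k0).+1 <= k)%N -> (k0 <= k)%N. Proof. lia. Qed.
Lemma natB k0 m : ((2 * k0).+1 <= k0 + m)%N -> (k0 < m)%N. Proof. lia. Qed.
Lemma natC k0 m : (k0 < m)%N -> (0 < k0 + m)%N. Proof. lia. Qed.

Section KLabs.
Variables (R : realType) (n : nat).

Lemma enorm0 : enorm (0 : 'rV[R]_n) = 0.
Proof. by rewrite -(scale0r (0 : 'rV[R]_n)) enormZ normr0 mul0r. Qed.

Lemma KL_rates (z : nat -> 'rV[R]_n) (xb : 'rV[R]_n) (a D : nat -> R)
  (al be T M q eta rho : R) (k1 : nat) :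
  0 < al -> 0 < be -> 0 < T -> 0 < M -> 0 < q -> q < 1 -> 0 < eta -> 0 < rho ->
  (forall k, (k1 <= k)%N -> 0 <= D k) ->
  (forall k, (k1 <= k)%N -> enorm (z k.+1 - z k) <= T * D k) ->
  (forall k, (k1 <= k)%N -> a k.+1 <= a k - al * D k ^+ 2) ->
  (forall k, (k1 <= k)%N -> 0 < a k) ->
  (forall k, (k1 <= k)%N -> enorm (z k - xb) < rho -> a k < eta ->
     M * powR (a k) q <= be * D k) ->
  (forall e, 0 < e -> forall K, exists k, (K <= k)%N /\ enorm (z k - xb) < e) ->
  (forall e, 0 < e -> exists K, forall k, (K <= k)%N -> a k < e) ->
  (q <= 1 / 2 ->
     exists C lam : R, 0 < C /\ 0 < lam < 1 /\
       exists K : nat, forall k, (K <= k)%N -> enorm (z k - xb) <= C * lam ^+ k) /\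
  (1 / 2 < q ->
     exists vr : R, 0 < vr /\
       exists K : nat, forall k, (K <= k)%N ->
         enorm (z k - xb) <= vr * powR (k%:R) (- ((1 - q) / (2 * q - 1)))).
Proof.
move=> al0 be0 T0 M0 q0 q1 eta0 rho0 D0 Hstep Hdec Hpos HKL Hacc Hlim.
pose r := 1 - q.
have r0 : 0 < r by rewrite /r subr_gt0.
have r1 : r < 1 by rewrite /r; lra.
pose phi k := powR (a k) r.
have phi0 : forall k, 0 <= phi k by move=> k; apply: powR_ge0.
pose Cp := be / (M * al * r).
have Cp0 : 0 < Cp by rewrite /Cp divr_gt0 // !mulr_gt0.
have amono : forall k m, (k1 <= k)%N -> a (k + m)%N <= a k.
  move=> k m kk; elim: m => [|m IH]; first by rewrite addn0.
  rewrite addnS; apply: le_trans (Hdec _ _) _; first by rewrite (leq_trans kk) // leq_addr.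
  have := sqr_ge0 (D (k + m)%N); nra.
have step : forall k, (k1 <= k)%N -> M * powR (a k) q <= be * D k ->
    D k <= Cp * (phi k - phi k.+1).
  move=> k kk HK.
  have ak := Hpos k kk; have ak1 := Hpos k.+1 (leqW kk).
  have T1 := conc_tangent ak1 ak r0 r1.
  rewrite (_ : 1 - r = q) in T1; last by rewrite /r; ring.
  have P0 : 0 < powR (a k) q by apply: powR_gt0.
  have hd := Hdec k kk; have Dk0 := D0 k kk.
  rewrite -/(phi k) -/(phi k.+1) in T1.
  move: T1 HK hd P0 Dk0.
  set P := powR (a k) q; set Dk := D k; set Dl := phi k - phi k.+1.
  move=> T1 HK hd P0 Dk0.
  have key : r * al * Dk ^+ 2 <= Dl * P by nra.
  have key2 : M * r * al * Dk * P <= be * Dl * P.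
    have : (M * P) * (r * al * Dk) <= (be * Dk) * (r * al * Dk).
      by apply: ler_wpM2r => //; rewrite !mulr_ge0 // ltW.
    nra.
  have key3 : M * r * al * Dk <= be * Dl by rewrite -(ler_pM2r P0).
  rewrite /Cp mulrAC ler_pdivlMr; last by rewrite !mulr_gt0.
  nra.
pose c0 := rho / (2 * T * Cp).
have c00 : 0 < c0.
  have h2 : 0 < 2 * T * Cp by rewrite mulr_gt0 // mulr_gt0.
  by rewrite /c0 divr_gt0.
pose s := powR c0 (1 / r).
have s0 : 0 < s by apply: powR_gt0.
have small : forall k, (k1 <= k)%N -> a k < s -> T * Cp * phi k < rho / 2.
  move=> k kk aks.
  have : phi k < powR s r.
    apply: gt0_ltr_powR => //; rewrite nnegrE ltW //; exact: Hpos.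
  rewrite /s -powRrM (_ : 1 / r * r = 1); last by field; rewrite gt_eqF.
  rewrite powRr1; last exact: ltW.
  move=> H; have : T * Cp * phi k < T * Cp * c0 by rewrite ltr_pM2l // mulr_gt0.
  rewrite /c0 (_ : T * Cp * (rho / (2 * T * Cp)) = rho / 2) //; field.
  by rewrite !gt_eqF.
have m0 : 0 < Num.min (Num.min eta 1) s by rewrite !lt_min eta0 ltr01 s0.
have [K1 HK1] := Hlim _ m0.
have rho2 : 0 < rho / 2 by rewrite divr_gt0.
have [k0 [Hk0 zk0]] := Hacc _ rho2 (maxn K1 k1).
have k1k0 : (k1 <= k0)%N by rewrite (leq_trans _ Hk0) // leq_maxr.
have K1k0 : (K1 <= k0)%N by rewrite (leq_trans _ Hk0) // leq_maxl.
have ak0 := HK1 k0 K1k0; rewrite !lt_min in ak0.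
case/andP: ak0 => /andP[ak0eta ak01] ak0s.
have smk0 := small k0 k1k0 ak0s.
have trap : forall m, enorm (z (k0 + m)%N - xb) <=
    enorm (z k0 - xb) + T * Cp * (phi k0 - phi (k0 + m)%N).
  elim=> [|m IH]; first by rewrite addn0 subrr mulr0 addr0.
  set k := (k0 + m)%N in IH *.
  have kk : (k1 <= k)%N by rewrite (leq_trans k1k0) // leq_addr.
  have ball : enorm (z k - xb) < rho.
    apply: le_lt_trans IH _.
    have : 0 <= T * Cp * phi k by rewrite mulr_ge0 // mulr_ge0 // ltW.
    lra.
  have aeta : a k < eta by apply: le_lt_trans (amono _ _ k1k0) ak0eta.
  have HD := step k kk (HKL k kk ball aeta).
  rewrite addnS -/k.
  apply: le_trans (enorm_tri3 _ (z k) _) _.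
  have := Hstep k kk; have : T * D k <= T * (Cp * (phi k - phi k.+1)) by rewrite ler_pM2l.
  lra.
have stepk : forall k, (k0 <= k)%N ->
    D k <= Cp * (phi k - phi k.+1) /\ M * powR (a k) q <= be * D k.
  move=> k kk0; have kk : (k1 <= k)%N by apply: leq_trans kk0.
  have ball : enorm (z k - xb) < rho.
    have := trap (k - k0)%N; rewrite subnKC // => IH.
    apply: le_lt_trans IH _.
    have : 0 <= T * Cp * phi k by rewrite mulr_ge0 // mulr_ge0 // ltW.
    lra.
  have aeta : a k < eta.
    have := amono k0 (k - k0)%N k1k0; rewrite subnKC // => H.
    exact: le_lt_trans H ak0eta.
  have HK := HKL k kk ball aeta; split => //; exact: step.
have tele : forall k m, (k0 <= k)%N ->
    enorm (z (k + m)%N - z k) <= T * Cp * (phi k - phi (k + m)%N).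
  move=> k m kk0; elim: m => [|m IH]; first by rewrite addn0 !subrr enorm0 mulr0.
  rewrite addnS.
  have kk : (k0 <= k + m)%N by rewrite (leq_trans kk0) // leq_addr.
  have [HD _] := stepk _ kk.
  apply: le_trans (enorm_tri3 _ (z (k + m)%N) _) _.
  have := Hstep (k + m)%N (leq_trans k1k0 kk).
  have : T * D (k + m)%N <= T * (Cp * (phi (k + m)%N - phi (k + m).+1)) by rewrite ler_pM2l.
  lra.
have bound : forall k, (k0 <= k)%N -> enorm (z k - xb) <= T * Cp * phi k.
  move=> k kk0; apply/ler_addgt0Pr => e e0.
  have [k' [kk' zk']] := Hacc e e0 k.
  apply: le_trans (enorm_tri3 _ (z k') _) _.
  rewrite enormB -(subnKC kk').
  have := tele k (k' - k)%N kk0.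
  have : 0 <= T * Cp * phi (k + (k' - k))%N by rewrite mulr_ge0 // mulr_ge0 // ltW.
  rewrite subnKC // in zk' *.
  lra.
pose c := al * M ^+ 2 / be ^+ 2.
have cpos : 0 < c by rewrite /c divr_gt0 // ?mulr_gt0 // exprn_gt0.
have decc : forall k, (k0 <= k)%N -> a k.+1 <= a k - c * powR (a k) q ^+ 2.
  move=> k kk0; have [_ HK] := stepk k kk0.
  have kk : (k1 <= k)%N by apply: leq_trans kk0.
  have hd := Hdec k kk.
  have P0 : 0 <= powR (a k) q by apply: powR_ge0.
  have sq : (M * powR (a k) q) ^+ 2 <= (be * D k) ^+ 2.
    rewrite !expr2; apply: ler_pM => //; by rewrite mulr_ge0 // ltW.
  have : c * powR (a k) q ^+ 2 <= al * D k ^+ 2.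
    have -> : c * powR (a k) q ^+ 2 = al / be ^+ 2 * (M * powR (a k) q) ^+ 2.
      by rewrite /c; field; rewrite gt_eqF.
    have -> : al * D k ^+ 2 = al / be ^+ 2 * (be * D k) ^+ 2.
      by field; rewrite gt_eqF.
    apply: ler_wpM2l => //; apply: divr_ge0; [exact: ltW | exact: sqr_ge0].
  lra.
have sqP : forall k, (k1 <= k)%N -> powR (a k) q ^+ 2 = powR (a k) (q * 2).
  move=> k kk; rewrite powRrM -powR_mulrn //; exact: powR_ge0.
split.
  move=> qh.
  have a1 : forall k, (k0 <= k)%N -> a k <= 1.
    move=> k kk0; have := amono k0 (k - k0)%N k1k0; rewrite subnKC // => H; lra.
  have lin : forall k, (k0 <= k)%N -> a k.+1 <= (1 - c) * a k.
    move=> k kk0; have kk : (k1 <= k)%N by apply: leq_trans kk0.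
    have := decc k kk0; rewrite (sqP k kk).
    have : a k <= powR (a k) (q * 2).
      by apply: ger1_powR; [rewrite Hpos // a1 | lra].
    nra.
  have c1 : c < 1.
    have := lin k0 (leqnn _); have := Hpos k0.+1 (leqW k1k0); have := Hpos k0 k1k0; nra.
  pose lam0 := 1 - c / 2.
  have lam00 : 0 < lam0 by rewrite /lam0; lra.
  have lam01 : lam0 < 1 by rewrite /lam0; lra.
  pose lam := powR lam0 r.
  have lam0' : 0 < lam by apply: powR_gt0.
  have lam1 : lam < 1.
    have := @gt0_ltr_powR R r r0 lam0 1; rewrite powR1; apply => //; rewrite nnegrE //; exact: ltW.
  have phistep : forall k, (k0 <= k)%N -> phi k.+1 <= lam * phi k.
    move=> k kk0; have kk := leq_trans k1k0 kk0.
    rewrite /phi /lam -powRM; last (by apply: ltW; apply: Hpos); last exact: ltW.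
    apply: (ge0_ler_powR (ltW r0)).
    - by rewrite nnegrE ltW // Hpos // leqW.
    - by rewrite nnegrE mulr_ge0 // ltW // Hpos.
    have := lin k kk0; have := Hpos k kk; rewrite /lam0; nra.
  have phim : forall m, phi (k0 + m)%N <= phi k0 * lam ^+ m.
    elim=> [|m IH]; first by rewrite addn0 expr0 mulr1.
    rewrite addnS; apply: le_trans (phistep _ (leq_addr _ _)) _.
    rewrite exprS (_ : phi k0 * (lam * lam ^+ m) = lam * (phi k0 * lam ^+ m)); last by ring.
    by rewrite ler_wpM2l // ltW.
  have phik0 : 0 < phi k0 by apply: powR_gt0; exact: Hpos.
  exists (T * Cp * phi k0 / lam ^+ k0), lam; split.
    by rewrite divr_gt0 // ?exprn_gt0 // mulr_gt0 // mulr_gt0.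
  split; first by rewrite lam0' lam1.
  exists k0 => k kk0.
  have [m ->] : exists m, k = (k0 + m)%N by exists (k - k0)%N; rewrite subnKC.
  apply: le_trans (bound _ (leq_addr _ _)) _.
  rewrite exprD.
  have -> : T * Cp * phi k0 / lam ^+ k0 * (lam ^+ k0 * lam ^+ m) =
      T * Cp * (phi k0 * lam ^+ m).
    by field; rewrite expf_neq0 // gt_eqF.
  by rewrite ler_pM2l // mulr_gt0.
move=> qh.
pose p := 2 * q - 1.
have p0 : 0 < p by rewrite /p; lra.
pose b k := powR (a k) (- p).
have b0 : forall k, 0 <= b k by move=> k; apply: powR_ge0.
have bP : forall k, (k1 <= k)%N -> b k * powR (a k) (q * 2) = a k.
  move=> k kk; rewrite /b -powRD; last by rewrite (gt_eqF (Hpos _ kk)) implybT.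
  rewrite (_ : - p + q * 2 = 1); last by rewrite /p; ring.
  by rewrite powRr1 // ltW // Hpos.
have bstep : forall k, (k0 <= k)%N -> b k + p * c <= b k.+1.
  move=> k kk0; have kk := leq_trans k1k0 kk0.
  have ak := Hpos k kk; have ak1 := Hpos k.+1 (leqW kk).
  pose u := a k.+1 / a k.
  have u0 : 0 < u by rewrite divr_gt0.
  have au : a k.+1 = u * a k by rewrite /u mulfVK // gt_eqF.
  have Hb := bern_neg u0 p0.
  have E : b k.+1 = powR u (- p) * b k by rewrite /b au powRM // ltW.
  have hd := decc k kk0; rewrite (sqP k kk) in hd.
  have hbp := bP k kk.
  move: hd hbp; set P2 := powR (a k) (q * 2) => hd hbp.
  have h1 : c * P2 <= (1 - u) * a k by rewrite mulrBl mul1r -au; lra.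
  have h2 : c * a k <= b k * (1 - u) * a k.
    have : b k * (c * P2) <= b k * ((1 - u) * a k) by rewrite ler_wpM2l.
    have -> : b k * (c * P2) = c * a k by rewrite -hbp; ring.
    by rewrite mulrA.
  have h3 : c <= b k * (1 - u) by rewrite -(ler_pM2r ak).
  rewrite E; have := ler_wpM2r (b0 k) Hb.
  have : p * c <= p * (b k * (1 - u)) by rewrite ler_pM2l.
  move=> H1 H2.
  have e2 : (1 - p * (u - 1)) * b k = b k + p * (b k * (1 - u)) by ring.
  rewrite e2 in H2; lra.
have bm : forall m, m%:R * (p * c) <= b (k0 + m)%N.
  elim=> [|m IH]; first by rewrite mul0r addn0.
  rewrite addnS; have := bstep _ (leq_addr m k0).
  have -> : m.+1%:R = m%:R + 1 :> R by rewrite -addn1 natrD.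
  lra.
pose s' := (1 - q) / (2 * q - 1).
have s'0 : 0 <= s' by rewrite /s' divr_ge0 //; lra.
have phib : forall k, phi k = powR (b k) (- s').
  move=> k; rewrite /b /phi -powRrM; congr powR; rewrite /s' /r /p; field.
  by rewrite gt_eqF //; lra.
have pc0 : 0 < p * c / 2 by rewrite divr_gt0 // mulr_gt0.
pose vr := T * Cp * powR (p * c / 2) (- s').
have vr0 : 0 < vr.
  by rewrite /vr; apply: mulr_gt0; [apply: mulr_gt0 | apply: powR_gt0].
exists vr; split => //.
exists (2 * k0).+1 => k kk.
have kk0 : (k0 <= k)%N by apply: natA kk.
have [m em] : exists m, k = (k0 + m)%N by exists (k - k0)%N; rewrite subnKC.
have km : (k0 < m)%N by apply: natB; rewrite -em.
rewrite em.
apply: le_trans (bound _ (leq_addr _ _)) _.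
rewrite phib.
have hm : (k0 + m)%N%:R * (p * c / 2) <= m%:R * (p * c).
  rewrite natrD; have : k0%:R <= m%:R :> R by rewrite ler_nat ltnW.
  have : 0 < p * c by rewrite mulr_gt0.
  nra.
have Y0 : 0 < (k0 + m)%N%:R * (p * c / 2).
  by rewrite mulr_gt0 // ltr0n; apply: natC.
have H := powR_neg_anti Y0 (le_trans hm (bm m)) s'0.
rewrite powRM in H; [|exact: ler0n|exact: ltW pc0].
rewrite /vr.
set A := powR (p * c / 2) _; set B := powR _ (- ((1 - q) / (2 * q - 1))).
rewrite (_ : T * Cp * A * B = T * Cp * (B * A)); last by ring.
by rewrite ler_pM2l //; exact: mulr_gt0 T0 Cp0.
Qed.
End KLabs.

Unset Implicit Arguments.

Theorem mainTheorem17 (R : realType) (n : nat)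
  (f : 'rV[R]_n -> R) (gf : 'rV[R]_n -> 'rV[R]_n) (L : R)
  (mu theta delta delta' : R)
  (x g d : nat -> 'rV[R]_n) (eps r rho t : nat -> R)
  (xbar : 'rV[R]_n) (M q : R) (j : nat -> nat) :
  C1_with_gradient f gf ->
  0 < L -> L_descent f gf L ->
  IRG_run gf L mu theta delta delta' x g d eps r rho t ->
  theta < mu ->
  (forall k, (1 <= k)%N -> rho k = eps k) ->
  0 < delta < 2 -> 0 < delta' -> delta' <= (2 - delta) / L ->
  (forall k, (1 <= k)%N -> delta' <= t k <= (2 - delta) / L) ->
  accumulation_point x xbar ->
  0 < M -> 0 < q < 1 -> KL_power f gf xbar M q ->
  (* j_1 < j_2 < ... enumerates the non-null iterations N \ N increasingly *)
  (forall k, (1 <= k)%N -> (j k < j k.+1)%N) ->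
  (forall m, (1 <= m)%N -> (x m.+1 != x m <-> exists k, (1 <= k)%N /\ j k = m)) ->
  (q <= 1 / 2 ->
     exists C lam : R, 0 < C /\ 0 < lam < 1 /\
       exists K : nat, forall k, (K <= k)%N ->
         enorm (x (j k) - xbar) <= C * lam ^+ k) /\
  (1 / 2 < q ->
     exists vr : R, 0 < vr /\
       exists K : nat, forall k, (K <= k)%N ->
         enorm (x (j k) - xbar) <= vr * powR (k%:R) (- ((1 - q) / (2 * q - 1)))).
Proof.
move=> [Hdiff _] L0 HLd [eps10 r10 /andP[mu0 mu1] /andP[th0 th1] Hk] thmu Hrho
  /andP[dl0 dl2] dp0 dpL Ht Hacc M0 /andP[q0 q1] [eta [eta0 [rh [rh0 HKL]]]] jinc jiff.
have ER : forall m, [/\ 0 < eps m.+1, 0 < r m.+1 & eps m.+1 * r 1%N <= eps 1%N * r m.+1].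
  elim=> [|m [e0 r0 er]]; first by split => //; rewrite mulrC.
  have [_ _ br _ _] := Hk m.+1 isT.
  move: br; case: ifP => _ [re ee _]; rewrite re ee.
    split; [exact: mulr_gt0 | exact: mulr_gt0 |].
    have : theta * (eps m.+1 * r 1%N) <= theta * (eps 1%N * r m.+1) by rewrite ler_pM2l.
    have : 0 < eps 1%N * r m.+1 by rewrite mulr_gt0.
    nra.
  by split.
pose c0 := eps 1%N / r 1%N.
have c00 : 0 < c0 by rewrite divr_gt0.
pose be := 1 + 2 * c0.
pose T := (2 - delta) / L.
pose al := delta * delta' / 2.
have T0 : 0 < T by rewrite /T divr_gt0 //; lra.
have al0 : 0 < al by rewrite /al divr_gt0 // mulr_gt0.
have be0 : 0 < be by rewrite /be; lra.
have NN : forall m, (1 <= m)%N -> x m.+1 != x m ->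
  [/\ 0 < enorm (d m), enorm (gf (x m)) <= be * enorm (d m),
      f (x m.+1) <= f (x m) - al * enorm (d m) ^+ 2 &
      enorm (x m.+1 - x m) <= T * enorm (d m)].
  move=> m m1 hnn.
  have [rhom err br tm0 xu] := Hk m m1.
  have [e0 r0 er] : [/\ 0 < eps m, 0 < r m & eps m * r 1%N <= eps 1%N * r m].
    by have := ER m.-1; rewrite prednK.
  move: br; case: ifP => hif [re ee de].
    by move: hnn; rewrite xu de scaler0 addr0 eqxx.
  move: hif de; set G := enorm (g m) => hif de.
  have hG : r m + eps m < G by rewrite ltNge hif.
  have G0 : 0 < G by lra.
  have w0 : 0 <= (G - eps m) / G by rewrite divr_ge0; lra.
  have hd : enorm (d m) = G - eps m.
    by rewrite de enormZ normrN ger0_norm // divfK // gt_eqF.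
  rewrite hd.
  rewrite (Hrho m m1) minxx in err.
  have hc : eps m <= c0 * (G - eps m).
    rewrite /c0 mulrAC ler_pdivlMr //.
    have : eps 1%N * r m <= eps 1%N * (G - eps m) by rewrite ler_pM2l //; lra.
    lra.
  have ed : x m.+1 - x m = t m *: d m by rewrite xu addrC addKr.
  have [tl tu] := andP (Ht m m1).
  split.
  - lra.
  - have -> : gf (x m) = g m + (gf (x m) - g m) by rewrite addrC subrK.
    apply: le_trans (enorm_triangle _ _) _.
    rewrite enormB -/G /be; nra.
  - have HL := HLd (x m) (x m.+1).
    rewrite ed dotvZr enormZ (ger0_norm (ltW tm0)) hd in HL.
    have dg : dotv (gf (x m)) (d m) <= - (G - eps m) ^+ 2.
      have -> : gf (x m) = (gf (x m) - g m) + g m by rewrite subrK.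
      rewrite dotvDl.
      have h1 := dotv_CS (gf (x m) - g m) (d m); rewrite enormB hd in h1.
      have h2 : dotv (g m) (d m) = - ((G - eps m) * G).
        by rewrite de dotvZr -enorm_sq -/G; field; rewrite gt_eqF.
      have h3 : enorm (g m - gf (x m)) * (G - eps m) <= eps m * (G - eps m).
        by rewrite ler_wpM2r //; lra.
      rewrite h2; lra.
    have tL : t m * L <= 2 - delta by rewrite -ler_pdivlMr.
    have key : al <= t m - L / 2 * t m ^+ 2 by rewrite /al; nra.
    have h4 : t m * dotv (gf (x m)) (d m) <= t m * (- (G - eps m) ^+ 2) by rewrite ler_pM2l.
    have h5 : al * (G - eps m) ^+ 2 <= (t m - L / 2 * t m ^+ 2) * (G - eps m) ^+ 2.
      by rewrite ler_wpM2r // sqr_ge0.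
    lra.
  - rewrite ed enormZ (ger0_norm (ltW tm0)) hd ler_wpM2r //; lra.
have jnull : forall m, (1 <= m)%N -> x m.+1 <> x m -> exists k, (1 <= k)%N /\ j k = m.
  by move=> m m1 hne; apply/(jiff m m1); apply/eqP.
have jle := jmono_le jinc.
have intv := interval_eq jinc jnull.
have jpos : forall k, (2 <= k)%N -> (1 <= j k)%N.
  move=> k k2; have h := jinc 1%N isT; have h2 := jle 2%N k isT k2.
  exact: leq_trans (leq_ltn_trans (leq0n _) h) h2.
have nonnull : forall k, (2 <= k)%N -> x (j k).+1 != x (j k).
  move=> k k2; apply/(jiff _ (jpos k k2)); exists k; split => //; exact: ltnW.
have zstep : forall k, (1 <= k)%N -> x (j k.+1) = x (j k).+1.
  move=> k k1; symmetry; apply: intv => //; exact: jinc.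
pose z k := x (j k).
pose a k := f (z k) - f xbar.
pose D k := enorm (d (j k)).
have hNN : forall k, (2 <= k)%N -> [/\ 0 < D k, enorm (gf (z k)) <= be * D k,
    a k.+1 <= a k - al * D k ^+ 2 & enorm (z k.+1 - z k) <= T * D k].
  move=> k k2; have [h1 h2 h3 h4] := NN _ (jpos k k2) (nonnull k k2).
  rewrite /a /z /D zstep; last exact: ltnW.
  split => //; lra.
have zacc : forall e, 0 < e -> forall K, exists k, (K <= k)%N /\ enorm (z k - xbar) < e.
  move=> e e0 K.
  have [i [hi hx]] := Hacc e e0 (j K.+2).+1.
  have j1i : (j 1 < i)%N.
    exact: leq_ltn_trans (jle 1%N K.+2 isT isT) hi.
  have [k [k1 hk1 hk2]] := covering jinc j1i.
  have Kk : (K.+2 <= k)%N.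
    case: (leqP K.+2 k) => // hlt.
    have := jle k.+1 K.+2 isT hlt.
    move=> h; have := leq_trans hi (leq_trans hk2 h); by rewrite ltnn.
  exists k.+1; split; first exact: natD Kk.
  by rewrite /z -(intv k k1 i hk1 hk2).
have Hc := cont_enorm (differentiable_continuous (Hdiff xbar).1).
have amono : forall k m, (2 <= k)%N -> a (k + m)%N <= a k.
  move=> k m k2; elim: m => [|m IH]; first by rewrite addn0.
  rewrite addnS; have [_ _ h _] := hNN (k + m)%N (leq_trans k2 (leq_addr _ _)).
  have := sqr_ge0 (D (k + m)%N); nra.
have Hpos : forall k, (2 <= k)%N -> 0 < a k.
  move=> k k2; rewrite ltNge; apply/negP => hk.
  have [D0 _ hd _] := hNN k k2.
  have hD : 0 < al * D k ^+ 2 by rewrite mulr_gt0 // exprn_gt0.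
  have e0 : 0 < - a k.+1 by lra.
  have [dl dlp Hdl] := Hc _ e0.
  have [k' [kk' hz]] := zacc dl dlp k.+1.
  have h1 := Hdl _ hz.
  have h2 := ler_norm (f xbar - f (z k')).
  have h3 := amono k.+1 (k' - k.+1)%N (leqW k2); rewrite subnKC // in h3.
  move: h3 h1; rewrite /a => h3 h1; lra.
have Hlim : forall e, 0 < e -> exists K, forall k, (K <= k)%N -> a k < e.
  move=> e e0; have [dl dlp Hdl] := Hc e e0.
  have [k [k2 hz]] := zacc dl dlp 2%N.
  exists k => k' kk'.
  have h1 := Hdl _ hz; rewrite distrC in h1.
  have h2 := ler_norm (f (z k) - f xbar).
  have h3 := amono k (k' - k)%N k2; rewrite subnKC // in h3.
  move: h3; rewrite /a => h3; lra.
have HKL' : forall k, (2 <= k)%N -> enorm (z k - xbar) < rh -> a k < eta ->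
    M * powR (a k) q <= be * D k.
  move=> k k2 hz ha.
  have hp := Hpos k k2.
  have [_ h2 _ _] := hNN k k2.
  apply: le_trans h2; apply: HKL => //; rewrite /a in hp ha; lra.
have := @KL_rates R n z xbar a D al be T M q eta rh 2%N al0 be0 T0 M0 q0 q1 eta0 rh0
  (fun k _ => enorm_ge0 _)
  (fun k k2 => let: And4 _ _ _ h := hNN k k2 in h)
  (fun k k2 => let: And4 _ _ h _ := hNN k k2 in h)
  Hpos HKL' zacc Hlim.
by [].
Qed.
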